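(* Let $p$ be a design on a set $\Omega\subseteq\{0,1\}^n$ of treatment vectors, with $p(\mathbf z)=P(\mathbf Z=\mathbf z)$. Each unit $i$ has exposure levels $\mathcal E_i=\{0,\dots,K_i-1\}$ and exposure $e_i=f(\mathbf z_{N_i})$, and potential outcomes $Y_i(z,e)$, $(z,e)\in\{0,1\}\times\mathcal E_i$. Fix $(z_1,e_1)\ne(z_0,e_0)$ in $\{0,1\}\times\mathcal E_i$ for all $i$, and let $\theta=\frac1n\sum_i\big(Y_i(z_1,e_1)-Y_i(z_0,e_0)\big)$. For each unit $i$ and $(z,e)$ let $\Omega_i(z,e)=\{\mathbf z\in\Omega:z_i=z,\ f(\mathbf z_{N_i})=e\}$ and $\pi_i(z,e)=\sum_{\mathbf z\in\Omega_i(z,e)}p(\mathbf z)$. Let weight functions $w_i:\Omega\to\mathbb R$ be given and $\hat\theta=\sum_iw_i(\mathbf Z)Y_i^{obs}$. Then $\mathbb E[\hat\theta]=\theta$ holds for every choice of the real numbers $\{Y_i(z,e)\}$ if and only if $0<\pi_i(z_1,e_1)<1$ and $0<\pi_i(z_0,e_0)<1$ for all $i$, and the weights satisfy, for all $i=1,\dots,n$, $$\sum_{\mathbf z\in\Omega_i(z_1,e_1)}w_i(\mathbf z)p(\mathbf z)=\frac1n,\qquad \sum_{\mathbf z\in\Omega_i(z_0,e_0)}w_i(\mathbf z)p(\mathbf z)=-\frac1n,$$ $$\sum_{\mathbf z\in\Omega_i(z,e)}w_i(\mathbf z)p(\mathbf z)=0\quad\text{for all }(z,e)\notin\{(z_0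,e_0),(z_1,e_1)\}.$$
   Context: Units $1,\dots,n$ each have an interference neighborhood $N_i\subseteq\{1,\dots,n\}\setminus\{i\}$ (e.g. induced by an interference graph) and an exposure function $f$ mapping $\{0,1\}^{N_i}$ onto $\mathcal E_i$. The observed outcome is $Y_i^{obs}=Y_i(Z_i,f(\mathbf Z_{N_i}))$. ''No structural assumptions'' means unbiasedness must hold for every table of potential outcomes. *)

(* Defs.v *)
From mathcomp Require Import all_boot all_order all_algebra.
Set Implicit Arguments. Unset Strict Implicit. Unset Printing Implicit Defensive.
Import Order.TTheory GRing.Theory Num.Theory.
Local Open Scope ring_scope.

Notation tvec n := {ffun 'I_n -> bool}.

Section Defs.
Variables (R : realFieldType) (n : nat).

Definition is_design (Omega : {set tvec n}) (p : tvec n -> R) : Prop :=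
  (forall z, z \in Omega -> 0 <= p z) /\ \sum_(z in Omega) p z = 1.

Definition is_neighborhood (N : 'I_n -> {set 'I_n}) : Prop :=
  forall i, i \notin N i.

(* Exposure map: f i z = f(z_{N_i}); it depends only on the coordinates of z
   in N_i, takes values in E_i = {0,...,K_i - 1} and is onto E_i. *)
Definition is_exposure (N : 'I_n -> {set 'I_n}) (K : 'I_n -> nat)
    (f : 'I_n -> tvec n -> nat) : Prop :=
  [/\ forall i (z z' : tvec n), (forall j, j \in N i -> z j = z' j) -> f i z = f i z',
      forall i (z : tvec n), (f i z < K i)%N
    & forall i e, (e < K i)%N -> exists z, f i z = e].

Definition Omega_i (Omega : {set tvec n}) (f : 'I_n -> tvec n -> nat)
    (i : 'I_n) (z : bool) (e : nat) : {set tvec n} :=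
  [set x in Omega | (x i == z) && (f i x == e)].

Definition pi_i (Omega : {set tvec n}) (p : tvec n -> R)
    (f : 'I_n -> tvec n -> nat) (i : 'I_n) (z : bool) (e : nat) : R :=
  \sum_(x in Omega_i Omega f i z e) p x.

Definition Yobs (Y : 'I_n -> bool -> nat -> R) (f : 'I_n -> tvec n -> nat)
    (i : 'I_n) (x : tvec n) : R :=
  Y i (x i) (f i x).

Definition theta_hat (w : 'I_n -> tvec n -> R) (Y : 'I_n -> bool -> nat -> R)
    (f : 'I_n -> tvec n -> nat) (x : tvec n) : R :=
  \sum_i w i x * Yobs Y f i x.

Definition expect (Omega : {set tvec n}) (p : tvec n -> R) (g : tvec n -> R) : R :=
  \sum_(x in Omega) p x * g x.

Definition theta (Y : 'I_n -> bool -> nat -> R) (z1 : bool) (e1 : nat)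
    (z0 : bool) (e0 : nat) : R :=
  n%:R^-1 * \sum_i (Y i z1 e1 - Y i z0 e0).

End Defs.

(* Main.v *)
Require Import Defs.
From mathcomp Require Import all_boot all_order all_algebra.
Import Order.TTheory GRing.Theory Num.Theory.
Local Open Scope ring_scope.

Section H.
Variables (R : realFieldType) (n : nat).

Lemma sum_ind (G : bool -> nat -> R) (b : bool) (m k : nat) : (m < k)%N ->
  \sum_(z : bool) \sum_(e < k) (if (b == z) && (m == e) then G z e else 0) = G b m.
Proof.
move=> lt; rewrite (bigD1 b) //=.
rewrite [X in _ + X]big1 ?addr0; last first.
  by move=> z nz; apply: big1 => e _; rewrite eq_sym (negbTE nz).
rewrite (bigD1 (Ordinal lt)) //= !eqxx /= big1 ?addr0 //.
move=> e ne; case: eqP => // me; case/eqP: ne; apply: val_inj => /=; by rewrite me.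
Qed.

Lemma decomp (Omega : {set tvec n}) (p : tvec n -> R) (K : 'I_n -> nat)
  (f : 'I_n -> tvec n -> nat) (w : 'I_n -> tvec n -> R) Y :
  (forall i x, (f i x < K i)%N) ->
  expect Omega p (theta_hat w Y f) =
  \sum_i \sum_(z : bool) \sum_(e < K i)
     Y i z e * \sum_(x in Omega_i Omega f i z e) w i x * p x.
Proof.
move=> fK; rewrite /expect /theta_hat.
under eq_bigr do rewrite mulr_sumr.
rewrite exchange_big /=; apply: eq_bigr => i _.
transitivity (\sum_(z : bool) \sum_(e < K i) \sum_(x in Omega)
   if (x i == z) && (f i x == e) then Y i z e * (w i x * p x) else 0); last first.
  apply: eq_bigr => z _; apply: eq_bigr => e _.
  rewrite mulr_sumr /Omega_i big_mkcond [RHS]big_mkcond; apply: eq_bigr => x _.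
  by rewrite inE; case: (x \in Omega).
transitivity (\sum_(x in Omega) \sum_(z : bool) \sum_(e < K i)
   if (x i == z) && (f i x == e) then Y i z e * (w i x * p x) else 0).
  apply: eq_bigr => x _.
  rewrite (sum_ind (fun z e => Y i z e * (w i x * p x))) //.
  rewrite /Yobs mulrA [p x * _]mulrC mulrC. exact: mulrC.
rewrite exchange_big; apply: eq_bigr => z _; exact: exchange_big.
Qed.


Lemma pi_pos (Omega : {set tvec n}) (p : tvec n -> R) (f : 'I_n -> tvec n -> nat)
  (w : 'I_n -> tvec n -> R) i z e :
  (forall x, x \in Omega -> 0 <= p x) ->
  \sum_(x in Omega_i Omega f i z e) w i x * p x != 0 -> 0 < pi_i Omega p f i z e.
Proof.
move=> p0 nz; have ge : forall x, x \in Omega_i Omega f i z e -> 0 <= p x.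
  by move=> x; rewrite inE => /andP[/p0].
rewrite lt0r sumr_ge0 // andbT; apply/eqP => /(psumr_eq0P ge) h.
by move/eqP: nz; apply; apply: big1 => x /h ->; rewrite mulr0.
Qed.

Lemma pi_le1 (Omega : {set tvec n}) (p : tvec n -> R) (f : 'I_n -> tvec n -> nat)
  i z1 e1 z0 e0 :
  is_design Omega p -> (z1, e1) != (z0, e0) ->
  pi_i Omega p f i z1 e1 + pi_i Omega p f i z0 e0 <= 1.
Proof.
case=> p0 p1 hne; rewrite -p1 /pi_i /Omega_i big_mkcond [X in _ + X]big_mkcond [X in _ <= X]big_mkcond /=.
rewrite -big_split /=; apply: ler_sum => x _; rewrite !inE.
case xO: (x \in Omega) => /=; last by rewrite addr0.
have px := p0 x xO.
case b1: ((x i == z1) && (f i x == e1)); case b0: ((x i == z0) && (f i x == e0));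
  rewrite ?addr0 ?add0r //.
case/andP: b1 => /eqP a /eqP b; case/andP: b0 => /eqP c /eqP d.
by move: hne; rewrite -a -b c d eqxx.
Qed.

End H.

Theorem theorem3 (R : realFieldType) (n : nat)
    (Omega : {set tvec n}) (p : tvec n -> R)
    (N : 'I_n -> {set 'I_n}) (K : 'I_n -> nat) (f : 'I_n -> tvec n -> nat)
    (z1 z0 : bool) (e1 e0 : nat) (w : 'I_n -> tvec n -> R) :
  is_design Omega p ->
  is_neighborhood N ->
  is_exposure N K f ->
  (forall i, (e1 < K i)%N) -> (forall i, (e0 < K i)%N) ->
  (z1, e1) != (z0, e0) ->
  ((forall Y : 'I_n -> bool -> nat -> R,
      expect Omega p (theta_hat w Y f) = theta Y z1 e1 z0 e0)
   <->
   ((forall i, 0 < pi_i Omega p f i z1 e1 < 1 /\ 0 < pi_i Omega p f i z0 e0 < 1)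
    /\ (forall i : 'I_n,
         [/\ \sum_(x in Omega_i Omega f i z1 e1) w i x * p x = n%:R^-1,
             \sum_(x in Omega_i Omega f i z0 e0) w i x * p x = - n%:R^-1
           & forall (z : bool) (e : nat), (e < K i)%N ->
               (z, e) != (z0, e0) -> (z, e) != (z1, e1) ->
               \sum_(x in Omega_i Omega f i z e) w i x * p x = 0]))).
Proof.
move=> hD hN [_ fK _] hK1 hK0 hne.
have d10 : ((z1 == z0) && (e1 == e0)) = false by apply/negbTE; rewrite -xpair_eqE.
have d01 : ((z0 == z1) && (e0 == e1)) = false.
  by rewrite eq_sym [e0 == _]eq_sym.
split.
- move=> H.
  have coef : forall j z (e : nat), (e < K j)%N ->
      \sum_(x in Omega_i Omega f j z e) w j x * p x =
      n%:R^-1 * (((z == z1) && (e == e1))%:R - ((z == z0) && (e == e0))%:R).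
    move=> j z e lt.
    have := H (fun i z' e' => ((i == j) && (z == z') && (e == e'))%:R).
    rewrite (@decomp _ _ _ _ _ _ _ _ fK) /theta (bigD1 j) //= [X in _ + X = _]big1 ?addr0; last first.
      by move=> k /negbTE kj; apply: big1 => z' _; apply: big1 => e' _; rewrite kj mul0r.
    rewrite [X in _ = _ * X](bigD1 j) //= [X in _ = _ * (_ + X)]big1 ?addr0; last first.
      by move=> k /negbTE kj; rewrite kj /= subr0.
    rewrite eqxx /= => <-.
    rewrite -(@sum_ind _ (fun z' e' => \sum_(x in Omega_i Omega f j z' e') w j x * p x) z e (K j) lt).
    apply: eq_bigr => z' _; apply: eq_bigr => e' _.
    by case: ((z == z') && (e == e')); rewrite ?mul1r ?mul0r.
  have n0 : forall i : 'I_n, n%:R^-1 != 0 :> R.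
    by move=> i; rewrite invr_eq0 pnatr_eq0 -lt0n; apply: leq_ltn_trans (ltn_ord i).
  have c1 : forall i, \sum_(x in Omega_i Omega f i z1 e1) w i x * p x = n%:R^-1.
    by move=> i; rewrite coef // !eqxx d10 subr0 mulr1.
  have c0 : forall i, \sum_(x in Omega_i Omega f i z0 e0) w i x * p x = - n%:R^-1.
    by move=> i; rewrite coef // !eqxx d01 sub0r mulrN1.
  split.
    move=> i; have q1 : 0 < pi_i Omega p f i z1 e1.
      by apply: (@pi_pos _ _ _ _ _ w) => //; [case: hD | rewrite c1 n0].
    have q0 : 0 < pi_i Omega p f i z0 e0.
      by apply: (@pi_pos _ _ _ _ _ w) => //; [case: hD | rewrite c0 oppr_eq0 n0].
    have le := @pi_le1 _ _ _ _ f i _ _ _ _ hD hne.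
    rewrite q1 q0; split.
      by apply: lt_le_trans le; rewrite ltrDl.
    by apply: lt_le_trans le; rewrite ltrDr.
  move=> i; split => // z e lt h0 h1; rewrite coef //.
  move: h0 h1; rewrite !xpair_eqE => /negbTE -> /negbTE ->.
  by rewrite subr0 mulr0.
- case=> _ Hw Y.
  rewrite (@decomp _ _ _ _ _ _ _ _ fK) /theta mulr_sumr; apply: eq_bigr => i _.
  case: (Hw i) => H1 H0 H2.
  transitivity (\sum_(z : bool) \sum_(e < K i)
     ((if (z1 == z) && (e1 == e) then n%:R^-1 * Y i z e else 0) +
      (if (z0 == z) && (e0 == e) then - (n%:R^-1 * Y i z e) else 0))).
    apply: eq_bigr => z _; apply: eq_bigr => e _.
    case: (boolP ((z, val e) == (z1, e1))) => h1.
      move: (h1); rewrite xpair_eqE => /andP[/eqP zz /eqP ee]; subst z.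
      rewrite ee H1 !eqxx /= d01 addr0; exact: mulrC.
    case: (boolP ((z, val e) == (z0, e0))) => h0.
      move: (h0); rewrite xpair_eqE => /andP[/eqP zz /eqP ee]; subst z.
      rewrite ee H0 !eqxx /= d10 add0r mulrN; congr (- _); exact: mulrC.
    rewrite H2 // mulr0.
    move: h1 h0; rewrite !xpair_eqE [z1 == _]eq_sym [e1 == _]eq_sym.
    by rewrite [z0 == _]eq_sym [e0 == _]eq_sym => /negbTE -> /negbTE -> /=; rewrite addr0.
  under eq_bigr do rewrite big_split /=.
  rewrite big_split /= (@sum_ind _ (fun z e => n%:R^-1 * Y i z e)) //.
  rewrite (@sum_ind _ (fun z e => - (n%:R^-1 * Y i z e))) //.
  by rewrite mulrBr.
Qed.
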